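(* Let $(M_I,\triangleright)$ be a prefactor system and let $i\le i'\le i''$ be indices in $I$. (1) If $M_I$ is direct (with embeddings $emb$), then for all $a_i\in M_i$ and $a_{i''}\in M_{i''}$: $a_{i''}\triangleright a_i$ implies $a_{i''}\triangleright emb_{i,i'}(a_i)$. (2) If $M_I$ is inverse (with projections $proj$), then for all $a_{i'}\in M_{i'}$ and $a_{i''}\in M_{i''}$: $a_{i''}\triangleright a_{i'}$ implies $a_{i''}\triangleright proj_{i',i}(a_{i'})$.
   Context: Let $(I,\le)$ be a non-empty directed preordered set (reflexive, transitive, every finite subset has an upper bound). A system $(M_I,\triangleright)$ consists of sets $M_i$ ($i\in I$, regarded as pairwise disjoint) and, for each $i\le i'$, a relation $\triangleright\subseteq M_{i'}\times M_i$ (written $a_{i'}\triangleright a_i$) which is reflexive when $i=i'$. Elements $a_i\in M_i$, $b_j\in M_j$ are consistent, written $a_i\approx b_j$, iff there are $i'\ge i,j$ and $c\in M_{i'}$ with $c\triangleright a_i$ and $c\triangleright b_j$. A prefactor system is a system such that $a_{i'}\approx a_i\iff a_{i'}\triangleright a_i$ for all $i\le i'$, $a_i\in M_i$, $a_{i'}\in M_{i'}$. A family of $\approx$-embeddings consists of maps $emb_{i,i'}:M_i\to M_{i'}$ ($i\le i'$) preserving $\approx$ (i.e. $a\approx b\Rightarrow emb_{i,i'}(a)\approx emb_{i,i'}(b)$) with $emb_{i,i}(a)\approx a$ and $emb_{i',i''}(emb_{i,i'}(a))\approx emb_{i,i''}(a)$. It is coherent if for all $i\le i'\le i''$: $a_{i'}\triangleright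 a_i\Rightarrow emb_{i',i''}(a_{i'})\triangleright a_i$. A family of $\approx$-projections consists of $\approx$-preserving maps $proj_{i',i}:M_{i'}\to M_i$ ($i\le i'$) with $proj_{i,i}(a)\approx a$ and $proj_{i',i}(proj_{i'',i'}(a))\approx proj_{i'',i}(a)$; it is coherent if for all $i\le i'\le i''$: $a_{i''}\triangleright a_i\Rightarrow proj_{i'',i'}(a_{i''})\triangleright a_i$. A prefactor system is direct iff it has coherent $\approx$-embeddings with $a_{i'}\triangleright a_i\iff a_{i'}\approx emb_{i,i'}(a_i)$ for all $i\le i'$; it is inverse iff it has coherent $\approx$-projections with $a_{i'}\triangleright a_i\iff proj_{i',i}(a_{i'})\approx a_i$ for all $i\le i'$. *)

(* Defs.v *)
Section Systems.
Variables (I : Type) (le : I -> I -> Prop) (M : I -> Type).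

(* Non-empty directed preordered set. "Every finite subset has an upper bound"
   is written as: I is inhabited and every pair has an upper bound. *)
Definition directed_preorder : Prop :=
  (forall i, le i i) /\
  (forall i j k, le i j -> le j k -> le i k) /\
  inhabited I /\
  (forall i j, exists k, le i k /\ le j k).

(* A relation [tr i i' a' a] meaning a' ▷ a, for a' : M i', a : M i;
   only meaningful when le i i'. *)
Variable tr : forall i i', M i' -> M i -> Prop.

Definition is_system : Prop :=
  directed_preorder /\ (forall i (a : M i), tr i i a a).

Definition consistent {i j} (a : M i) (b : M j) : Prop :=
  exists i', le i i' /\ le j i' /\ exists c : M i', tr i i' c a /\ tr j i' c b.

Definition prefactor_system : Prop :=
  is_system /\
  forall i i', le i i' -> forall (a : M i) (a' : M i'),
    consistent a' a <-> tr i i' a' a.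

Variable emb : forall i i', M i -> M i'.

Definition emb_family : Prop :=
  (forall i i', le i i' -> forall a b : M i,
     consistent a b -> consistent (emb i i' a) (emb i i' b)) /\
  (forall i (a : M i), consistent (emb i i a) a) /\
  (forall i i' i'', le i i' -> le i' i'' -> forall a : M i,
     consistent (emb i' i'' (emb i i' a)) (emb i i'' a)).

Definition emb_coherent : Prop :=
  forall i i' i'', le i i' -> le i' i'' -> forall (a : M i) (a' : M i'),
    tr i i' a' a -> tr i i'' (emb i' i'' a') a.

Definition direct_with : Prop :=
  prefactor_system /\ emb_family /\ emb_coherent /\
  forall i i', le i i' -> forall (a : M i) (a' : M i'),
    tr i i' a' a <-> consistent a' (emb i i' a).

Variable proj : forall i' i, M i' -> M i.

Definition proj_family : Prop :=
  (forall i i', le i i' -> forall a b : M i',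
     consistent a b -> consistent (proj i' i a) (proj i' i b)) /\
  (forall i (a : M i), consistent (proj i i a) a) /\
  (forall i i' i'', le i i' -> le i' i'' -> forall a : M i'',
     consistent (proj i' i (proj i'' i' a)) (proj i'' i a)).

Definition proj_coherent : Prop :=
  forall i i' i'', le i i' -> le i' i'' -> forall (a : M i) (a'' : M i''),
    tr i i'' a'' a -> tr i i' (proj i'' i' a'') a.

Definition inverse_with : Prop :=
  prefactor_system /\ proj_family /\ proj_coherent /\
  forall i i', le i i' -> forall (a : M i) (a' : M i'),
    tr i i' a' a <-> consistent (proj i' i a') a.

End Systems.

Arguments directed_preorder {I} le.
Arguments prefactor_system {I} le {M} tr.
Arguments direct_with {I} le {M} tr emb.
Arguments inverse_with {I} le {M} tr proj.

(* Main.v *)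
Require Import Defs.

Section H.
Variables (I : Type) (le : I -> I -> Prop) (M : I -> Type)
  (tr : forall i i', M i' -> M i -> Prop).
Hypothesis HP : prefactor_system le tr.

Lemma cons_tr j (x y : M j) : @consistent I le M tr j j x y <-> tr j j x y.
Proof.
  destruct HP as [[[Hrefl _] _] Hpf]. apply (Hpf j j (Hrefl j)).
Qed.

Lemma tr_sym j (x y : M j) : tr j j x y -> tr j j y x.
Proof.
  intro H. apply cons_tr. destruct HP as [[[Hrefl _] Hr] _].
  exists j; split; [apply Hrefl|split;[apply Hrefl|]]. exists x; split; auto.
Qed.

Lemma tr_trans j (x y z : M j) : tr j j x y -> tr j j y z -> tr j j x z.
Proof.
  intros H1 H2. apply tr_sym in H1. apply cons_tr.
  destruct HP as [[[Hrefl _] _] _].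
  exists j; split; [apply Hrefl|split;[apply Hrefl|]]. exists y; split; auto.
Qed.
End H.

Theorem lemma2p5 (I : Type) (le : I -> I -> Prop) (M : I -> Type)
  (tr : forall i i', M i' -> M i -> Prop) :
  prefactor_system le tr ->
  forall i i' i'' : I, le i i' -> le i' i'' ->
  (forall emb : forall j j', M j -> M j',
     direct_with le tr emb ->
     forall (a : M i) (a'' : M i''),
       tr i i'' a'' a -> tr i' i'' a'' (emb i i' a)) /\
  (forall proj : forall j' j, M j' -> M j,
     inverse_with le tr proj ->
     forall (a' : M i') (a'' : M i''),
       tr i' i'' a'' a' -> tr i i'' a'' (proj i' i a')).
Proof.
  intros HP i i' i'' H1 H2.
  pose proof HP as HP'. destruct HP' as [[[Hrefl [Htr _]] Hr] Hpf].
  assert (H3 : le i i'') by eauto.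
  split.
  - intros emb [_ [_ [Hcoh Hd]]] a a'' Ha.
    assert (Hb : tr i i' (emb i i' a) a).
    { apply Hd; auto. exists i'; split; [apply Hrefl|split;[apply Hrefl|]].
      exists (emb i i' a); split; apply Hr. }
    pose proof (Hcoh i i' i'' H1 H2 _ _ Hb) as Hf.
    apply (Hd _ _ H3) in Hf. apply (cons_tr _ _ _ _ HP) in Hf.
    apply (Hd _ _ H3) in Ha. apply (cons_tr _ _ _ _ HP) in Ha.
    apply Hd; auto. apply (cons_tr _ _ _ _ HP).
    eapply (tr_trans _ _ _ _ HP); [exact Ha|]. apply (tr_sym _ _ _ _ HP); auto.
  - intros proj [_ [[Hpres [_ Hcomp]] [_ Hinv]]] a' a'' Ha.
    apply Hinv; auto. apply (cons_tr _ _ _ _ HP).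
    apply (Hinv _ _ H2) in Ha.
    pose proof (Hpres i i' H1 _ _ Ha) as Hq. apply (cons_tr _ _ _ _ HP) in Hq.
    pose proof (Hcomp i i' i'' H1 H2 a'') as Hs. apply (cons_tr _ _ _ _ HP) in Hs.
    eapply (tr_trans _ _ _ _ HP); [ |exact Hq]. apply (tr_sym _ _ _ _ HP); auto.
Qed.
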